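(* There is an absolute constant $C > 0$ such that for every $L \geq 2$, $m \geq 1$, $k^* \in [m]$, $i \in \{0, \ldots, L\}$, $k \in [m]$ and $\lambda \in [m]^{L+1}$, every state $\tau$ on the path $\gamma_{\lambda, \lambda_{[i,k]}}$ differs from $\lambda$ in at most $C\log L$ coordinates and differs from $\lambda_{[i,k]}$ in at most $C\log L$ coordinates.
   Context: States are $\lambda = (\lambda_0,\ldots,\lambda_L) \in [m]^{L+1}$; coordinate $\ell$ is level $\ell$. $\lambda_{[i,k]}$ is $\lambda$ with the level-$i$ entry replaced by $k$. The procedure $\mathbf{Swap}(a,b)$ ($0\le a\le b\le L$): if $b - a \leq 1$, perform the single elementary operation exchanging the entries at levels $a$ and $b$; otherwise with $h = \lfloor (a+b)/2 \rfloor$ perform $\mathbf{Swap}(a,h)$, then $\mathbf{Swap}(h,b)$, then $\mathbf{Swap}(a,h)$. The path $\gamma_{\lambda,\lambda_{[i,k]}}$ (with $k^*$ a fixed element of $[m]$; in the paper a maximizer of $\pi_L(A_k)$) starts at $\lambda$ and performs in order: (1) set the level-0 entry to $k^*$; (2) $\mathbf{Swap}(0,i)$; (3) set the level-0 entry to $k$; (4) $\mathbf{Swap}(0,i)$; (5) set the level-0 entry to $\lambda_0$. The path is the sequence of states consisting of $\lambda$ and the state after each elementary operation. Two states differ in coordinate $\ell$ if their level-$\ell$ entries are unequal. *)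

(* Defs.v *)
From Stdlib Require Import Reals.
From mathcomp Require Import all_boot.
Set Implicit Arguments. Unset Strict Implicit. Unset Printing Implicit Defensive.

Section Paths.
Variables (L m : nat).

Definition state := 'I_L.+1 -> 'I_m.

Inductive elop :=
  | SetZero of 'I_m
  | Exch of nat & nat.

Definition apply_op (tau : state) (o : elop) : state :=
  match o with
  | SetZero v => fun l => if nat_of_ord l == 0 then v else tau l
  | Exch a b => fun l =>
      if nat_of_ord l == a then tau (inord b)
      else if nat_of_ord l == b then tau (inord a)
      else tau l
  end.

(* Swap(a,b) as its list of elementary operations; [fuel] bounds the recursion
   depth, and fuel = b - a is always sufficient (see swap_ops below). *)
Fixpoint swap_ops_fuel (fuel a b : nat) : seq elop :=
  if b - a <= 1 then [:: Exch a b] else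
  match fuel with
  | 0 => [::]
  | fuel'.+1 =>
      let h := (a + b) %/ 2 in
      swap_ops_fuel fuel' a h ++ swap_ops_fuel fuel' h b ++ swap_ops_fuel fuel' a h
  end.

Definition swap_ops (a b : nat) : seq elop := swap_ops_fuel (b - a) a b.

Definition replace_at (lam : state) (i : 'I_L.+1) (k : 'I_m) : state :=
  fun l => if l == i then k else lam l.

Definition gamma_ops (kstar : 'I_m) (lam : state) (i : 'I_L.+1) (k : 'I_m) : seq elop :=
  [:: SetZero kstar] ++ swap_ops 0 i ++ [:: SetZero k] ++ swap_ops 0 i
  ++ [:: SetZero (lam ord0)].

Definition gamma_path (kstar : 'I_m) (lam : state) (i : 'I_L.+1) (k : 'I_m)
  : seq state :=
  lam :: scanl apply_op lam (gamma_ops kstar lam i k).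

Definition ndiff (s t : state) : nat := #|[pred l : 'I_L.+1 | s l != t l]|.

End Paths.

(* Main.v *)
Set Warnings "-notation-overridden".
Require Import Defs.
From Stdlib Require Import Reals.
From mathcomp Require Import all_boot.
From mathcomp Require Import zify.
From Stdlib Require Import FunctionalExtensionality Lra.

Set Implicit Arguments. Unset Strict Implicit. Unset Printing Implicit Defensive.

Section Aux.
Variables (L m : nat).
Local Notation st := (state L m).
Local Notation op := (elop m).

Lemma ndiff_tri (x y z : st) : ndiff x z <= ndiff x y + ndiff y z.
Proof.
rewrite /ndiff -cardUI.
apply: (leq_trans _ (leq_addr _ _)).
apply: subset_leq_card; apply/subsetP => l; rewrite !inE.
case: (eqVneq (x l) (y l)) => [->|]; [by rewrite orbC; case: (_ != _)|by []].
Qed.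

Lemma ndiff_refl (x : st) : ndiff x x = 0.
Proof. by apply: eq_card0 => l; rewrite !inE eqxx. Qed.

Lemma ndiff_set0 (tau : st) v : ndiff (apply_op tau (SetZero v)) tau <= 1.
Proof.
rewrite /ndiff -(card1 (@ord0 L)); apply: subset_leq_card; apply/subsetP => l.
rewrite !inE /=; case: (eqVneq (nat_of_ord l) 0) => [H _|_].
  by apply/eqP/val_inj.
by rewrite eqxx.
Qed.

Lemma ndiff_exch (tau : st) a b : a <= L -> b <= L ->
  ndiff (apply_op tau (Exch m a b)) tau <= 2.
Proof.
move=> aL bL.
rewrite /ndiff; apply: (@leq_trans #|[set (@inord L a); inord b]|); last first.
  by rewrite cards2; case: (_ != _).
apply: subset_leq_card; apply/subsetP => l; rewrite !inE /=.
case: (eqVneq (l : nat) a) => [<- _|_]; first by rewrite /= inord_val eqxx.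
  case: (eqVneq (l : nat) b) => [<- _|_]; first by rewrite inord_val eqxx orbT.
  by rewrite eqxx.
Qed.

Definition Pb (os : seq op) B := forall (tau : st) n,
  ndiff (foldl (@apply_op L m) tau (take n os)) tau <= B.
Definition Nb (os : seq op) B := forall (tau : st),
  ndiff (foldl (@apply_op L m) tau os) tau <= B.

Lemma Pb_Nb os B : Pb os B -> Nb os B.
Proof. by move=> H tau; have := H tau (size os); rewrite take_size. Qed.

Lemma Pb_mono os B B' : B <= B' -> Pb os B -> Pb os B'.
Proof. by move=> h H tau n; apply: leq_trans (H tau n) h. Qed.

Lemma Pcat os1 os2 B1 N1 B2 : Pb os1 B1 -> Nb os1 N1 -> Pb os2 B2 ->
  Pb (os1 ++ os2) (maxn B1 (N1 + B2)).
Proof.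
move=> P1 N P2 tau n; rewrite take_cat.
case: ifP => _.
  by apply: leq_trans (P1 tau n) (leq_maxl _ _).
rewrite foldl_cat; apply: leq_trans (ndiff_tri _ (foldl (@apply_op L m) tau os1) _) _.
have := P2 (foldl (@apply_op L m) tau os1) (n - size os1).
have := N tau. lia.
Qed.

Lemma Pb_set0 v : Pb [:: SetZero v] 1.
Proof.
move=> tau [|n] /=; first by rewrite ndiff_refl.
by apply: ndiff_set0.
Qed.

Lemma Pb_exch a b : a <= L -> b <= L -> Pb [:: Exch m a b] 2.
Proof.
move=> aL bL tau [|n] /=; first by rewrite ndiff_refl.
by apply: ndiff_exch.
Qed.

Lemma exch3 (tau : st) a h b : a < h -> h < b -> b <= L ->
  apply_op (apply_op (apply_op tau (Exch m a h)) (Exch m h b)) (Exch m a h)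
  = apply_op tau (Exch m a b).
Proof.
move=> ah hb bL; apply: functional_extensionality => l /=.
have aL : a < L.+1 by lia.
have hL : h < L.+1 by lia.
have bL' : b < L.+1 by lia.
rewrite !inordK //.
have e1 : (a == h) = false by apply/eqP; lia.
have e2 : (h == a) = false by apply/eqP; lia.
have e3 : (a == b) = false by apply/eqP; lia.
have e4 : (b == a) = false by apply/eqP; lia.
have e5 : (h == b) = false by apply/eqP; lia.
have e6 : (b == h) = false by apply/eqP; lia.
rewrite ?eqxx ?e1 ?e2 ?e3 ?e4 ?e5 ?e6.
case: (eqVneq (l : nat) a) => [la|la]; first done.
case: (eqVneq (l : nat) h) => [lh|lh].
  rewrite ?e1 ?e2 ?e3 ?e4 ?e5 ?e6 /=.
  have -> : (l : nat) == b = false by apply/eqP; lia.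
  by congr (tau _); apply: val_inj; rewrite /= inordK // lh.
done.
Qed.

Lemma swap_net fuel : forall (tau : st) a b, a <= b -> b <= L -> b - a <= fuel ->
  foldl (@apply_op L m) tau (swap_ops_fuel m fuel a b) = apply_op tau (Exch m a b).
Proof.
elim: fuel => [|f IH] tau a b ab bL hf /=.
  by have -> : b - a <= 1 by lia.
case: ifP => // hd.
rewrite !foldl_cat.
have h1 : a < (a + b) %/ 2 by lia.
have h2 : (a + b) %/ 2 < b by lia.
rewrite IH; try lia. rewrite IH; try lia. rewrite IH; try lia.
by apply: exch3.
Qed.

Lemma swap_prefix fuel : forall e a b, a <= b -> b <= L -> b - a <= fuel ->
  b - a <= 2 ^ e -> Pb (swap_ops_fuel m fuel a b) (2 + 4 * e).
Proof.
elim: fuel => [|f IH] e a b ab bL hf he /=.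
  have -> : b - a <= 1 by lia.
  by apply: Pb_mono (Pb_exch _ _); lia.
case: ifP => hd.
  by apply: Pb_mono (Pb_exch _ _); lia.
case: e he => [|e] he; first by rewrite expn0 in he; lia.
rewrite expnS in he.
set h := (a + b) %/ 2.
have P1 : Pb (swap_ops_fuel m f a h) (2 + 4 * e) by apply: IH; rewrite /h; lia.
have P2 : Pb (swap_ops_fuel m f h b) (2 + 4 * e) by apply: IH; rewrite /h; lia.
have N1 : Nb (swap_ops_fuel m f a h) 2.
  move=> tau; rewrite swap_net; try (rewrite /h; lia).
  by apply: ndiff_exch; rewrite /h; lia.
have N2 : Nb (swap_ops_fuel m f a h ++ swap_ops_fuel m f h b) 4.
  move=> tau; rewrite foldl_cat.
  have ha : a <= h by rewrite /h; lia.
  have hhb : h <= b by rewrite /h; lia.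
  have hL : h <= L by lia.
  have d1 : h - a <= f by rewrite /h; lia.
  have d2 : b - h <= f by rewrite /h; lia.
  rewrite (@swap_net f tau a h) // (@swap_net f _ h b) //.
  apply: leq_trans (ndiff_tri _ (apply_op tau (Exch m a h)) _) _.
  have := @ndiff_exch (apply_op tau (Exch m a h)) h b hL bL.
  have := @ndiff_exch tau a h (leq_trans ha hL) hL.
  lia.
rewrite catA.
apply: Pb_mono (Pcat (Pcat P1 N1 P2) N2 P1); lia.
Qed.

Lemma in_scanl (tau lam : st) (os : seq op) :
  List.In tau (lam :: scanl (@apply_op L m) lam os) ->
  exists n, tau = foldl (@apply_op L m) lam (take n os).
Proof.
elim: os lam => [|o os IH] lam /=.
  by move=> [->|[]]; exists 0.
move=> [->|H]; first by exists 0.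
have [n ->] := IH _ H; by exists n.+1.
Qed.

Lemma path_bound (kstar : 'I_m) (i : 'I_L.+1) (k : 'I_m) (lam : st) e :
  L <= 2 ^ e ->
  forall tau, List.In tau (gamma_path kstar lam i k) ->
  ndiff tau lam <= 7 + 8 * e /\ ndiff tau (replace_at lam i k) <= 8 + 8 * e.
Proof.
move=> hL tau Hin.
have [n ->] := in_scanl Hin.
have iL : (i : nat) <= L by have := ltn_ord i; lia.
have PS : Pb (swap_ops m 0 i) (2 + 4 * e).
  by apply: swap_prefix; lia.
have NS := Pb_Nb PS.
have PA : Pb (gamma_ops kstar lam i k) (7 + 8 * e).
  rewrite /gamma_ops.
  have X1 := Pcat PS NS (Pb_set0 (lam ord0)).
  have X2 := Pcat (Pb_set0 k) (Pb_Nb (Pb_set0 k)) X1.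
  have X3 := Pcat PS NS X2.
  have X4 := Pcat (Pb_set0 kstar) (Pb_Nb (Pb_set0 kstar)) X3.
  by apply: Pb_mono X4; lia.
have H1 := PA lam n.
split => //.
apply: leq_trans (ndiff_tri _ lam _) _.
have : ndiff lam (replace_at lam i k) <= 1.
  rewrite /ndiff -(card1 i); apply: subset_leq_card; apply/subsetP => l.
  rewrite !inE /replace_at; case: (eqVneq l i) => [->|_]; by rewrite ?eqxx.
lia.
Qed.

End Aux.

Section RealPart.
Local Open Scope R_scope.

Lemma INR_expn2 t : INR (2 ^ t)%N = pow 2 t.
Proof.
elim: t => [|t IH]; first by [].
rewrite expnS mult_INR IH /=. by [].
Qed.

Lemma ln2_pos : 0 < ln 2.
Proof. rewrite -ln_1; apply: ln_increasing; lra. Qed.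

Definition C0 := 24 / ln 2.
Lemma C0_pos : 0 < C0.
Proof. by apply: Rdiv_lt_0_compat; have := ln2_pos; lra. Qed.

Lemma real_key (L t x : nat) : (2 ^ t <= L)%N -> (x <= 24 * t)%N ->
  INR x <= C0 * ln (INR L).
Proof.
move=> hp hx; rewrite /C0.
have ln2 := ln2_pos.
have hx' : (x <= 24 * t)%coq_nat by apply/leP.
apply: Rle_trans (le_INR _ _ hx') _.
rewrite mult_INR (_ : INR 24 = 24); last by simpl; ring.
have H : INR t * ln 2 <= ln (INR L).
  rewrite -ln_pow; last lra.
  rewrite -INR_expn2.
  have hp' : (2 ^ t <= L)%coq_nat by apply/leP.
  have p0 : 0 < INR (2 ^ t)%N by apply: lt_0_INR; apply/ltP; rewrite expn_gt0.
  have [lt|eq] := Rle_lt_or_eq_dec _ _ (le_INR _ _ hp').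
    by left; apply: ln_increasing.
  by right; rewrite eq.
apply: Rle_trans (_ : 24 / ln 2 * (INR t * ln 2) <= _).
  right; field; lra.
apply: Rmult_le_compat_l => //.
by apply: Rlt_le; apply: Rdiv_lt_0_compat; lra.
Qed.

End RealPart.

Theorem lemma4 :
  exists C : R, Rlt 0 C /\
    forall (L m : nat), 2 <= L -> 1 <= m ->
    forall (kstar : 'I_m) (i : 'I_L.+1) (k : 'I_m) (lam : state L m),
    forall tau : state L m, List.In tau (gamma_path kstar lam i k) ->
      Rle (INR (ndiff tau lam)) (Rmult C (ln (INR L))) /\
      Rle (INR (ndiff tau (replace_at lam i k))) (Rmult C (ln (INR L))).
Proof.
exists C0; split; first exact: C0_pos.
move=> L m L2 _ kstar i k lam tau Hin.
set t := trunc_log 2 L.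
have tpos : 0 < t by rewrite /t trunc_log_gt0; lia.
have hL : L <= 2 ^ t.+1 by apply: ltnW; apply: trunc_log_ltn.
have hp : 2 ^ t <= L by apply: trunc_logP; lia.
have [B1 B2] := path_bound hL Hin.
split; apply: (real_key hp); lia.
Qed.
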